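(* Let $(X,d,A)$ be a metric pair with $(X,d)$ complete. Then $(\overline{D}_\infty(X,A),W_\infty)$ is complete.
   Context: A metric on $X$ is a map $d:X\times X\to[0,\infty]$ with $d(x,x)=0$, symmetry and the triangle inequality (infinite distances allowed, $d(x,y)=0$ need not imply $x=y$, so limits need not be unique); complete means every Cauchy sequence converges. A metric pair $(X,d,A)$ is such a space with a closed subset $A$. Write $d(x,A)=\inf_{a\in A}d(x,a)$, $A^\delta=\{x:d(x,A)<\delta\}$. $\overline{D}(X,A)$ is the set of countable formal sums $\hat\alpha=\sum_{i\in I}x_i$ of points of $X\setminus A$ (repetitions allowed). A matching of $\hat\alpha=\sum_{i\in I}x_i$, $\hat\beta=\sum_{j\in J}y_j$ is a formal sum $\sum_{k\in K}(x_k,y_{\varphi(k)})+\sum_{i\in I\setminus K}(x_i,z_i)+\sum_{j\in J\setminus\varphi(K)}(w_j,y_j)$ with $K\subset I$, $\varphi$ injective, $z_i,w_j\in A$; its $\infty$-cost is the supremum of the distances of paired points, and $W_\infty(\alpha,\beta)$ is the infimum of $\infty$-costs over matchings. $u_\delta(\alpha)$ is the restriction of $\hat\alpha$ to $X\setminus A^\delta$, and $\overline{D}_\infty(X,A)=\{\alpha\in\overline{D}(X,A):|u_\delta(\alpha)|<\infty\text{ for all }\delta>0\}$. *)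

(* Defs.v *)
From Stdlib Require Import Reals List.
From Coquelicot Require Import Coquelicot.
Set Implicit Arguments.
Open Scope R_scope.

Definition is_ext_metric (X : Type) (d : X -> X -> Rbar) : Prop :=
  (forall x y, Rbar_le (Finite 0) (d x y)) /\
  (forall x, d x x = Finite 0) /\
  (forall x y, d x y = d y x) /\
  (forall x y z, Rbar_le (d x z) (Rbar_plus (d x y) (d y z))).

(* d(x, A) = inf_{a in A} d(x, a)  (= +oo if A is empty) *)
Definition dist_set (X : Type) (d : X -> X -> Rbar) (A : X -> Prop) (x : X) : Rbar :=
  Rbar_glb (fun r => exists a, A a /\ r = d x a).

Definition is_closed_set (X : Type) (d : X -> X -> Rbar) (A : X -> Prop) : Prop :=
  forall x, (forall eps : R, 0 < eps -> exists a, A a /\ Rbar_lt (d x a) (Finite eps)) -> A x.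

Definition cauchy_seq (T : Type) (d : T -> T -> Rbar) (u : nat -> T) : Prop :=
  forall eps : R, 0 < eps ->
    exists N : nat, forall m n, (N <= m)%nat -> (N <= n)%nat -> Rbar_lt (d (u m) (u n)) (Finite eps).

Definition converges_to (T : Type) (d : T -> T -> Rbar) (u : nat -> T) (l : T) : Prop :=
  forall eps : R, 0 < eps ->
    exists N : nat, forall n, (N <= n)%nat -> Rbar_lt (d (u n) l) (Finite eps).

Definition complete_on (T : Type) (P : T -> Prop) (d : T -> T -> Rbar) : Prop :=
  forall u : nat -> T, (forall n, P (u n)) -> cauchy_seq d u ->
    exists l, P l /\ converges_to d u l.

(* A countable formal sum sum_{i in I} x_i: the countable index set I is
   represented as a subset of nat, the points by a map nat -> X. *)
Record fsum (X : Type) := FSum { fidx : nat -> Prop ; fpt : nat -> X }.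

Definition in_Dbar (X : Type) (A : X -> Prop) (a : fsum X) : Prop :=
  forall i, fidx a i -> ~ A (fpt a i).

(* |u_delta(alpha)| < oo : finitely many indices i with x_i outside A^delta *)
Definition in_Dinf (X : Type) (d : X -> X -> Rbar) (A : X -> Prop) (a : fsum X) : Prop :=
  in_Dbar A a /\
  forall delta : R, 0 < delta ->
    exists l : list nat, forall i, fidx a i ->
      ~ Rbar_lt (dist_set d A (fpt a i)) (Finite delta) -> In i l.

Definition is_matching (X : Type) (A : X -> Prop) (a b : fsum X)
  (K : nat -> Prop) (phi : nat -> nat) (z w : nat -> X) : Prop :=
  (forall k, K k -> fidx a k) /\
  (forall k, K k -> fidx b (phi k)) /\
  (forall k k', K k -> K k' -> phi k = phi k' -> k = k') /\
  (forall i, fidx a i -> ~ K i -> A (z i)) /\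
  (forall j, fidx b j -> ~ (exists k, K k /\ phi k = j) -> A (w j)).

(* infinity-cost: supremum of the distances of paired points
   (0 is included so that the empty supremum is 0 in [0, oo]) *)
Definition match_cost (X : Type) (d : X -> X -> Rbar) (a b : fsum X)
  (K : nat -> Prop) (phi : nat -> nat) (z w : nat -> X) : Rbar :=
  Rbar_lub (fun r =>
    r = Finite 0 \/
    (exists k, K k /\ r = d (fpt a k) (fpt b (phi k))) \/
    (exists i, fidx a i /\ ~ K i /\ r = d (fpt a i) (z i)) \/
    (exists j, fidx b j /\ ~ (exists k, K k /\ phi k = j) /\ r = d (w j) (fpt b j))).

Definition W_inf (X : Type) (d : X -> X -> Rbar) (A : X -> Prop) (a b : fsum X) : Rbar :=
  Rbar_glb (fun c => exists K phi z w,
    is_matching A a b K phi z w /\ c = match_cost d a b K phi z w).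

(* Main.v *)
Require Import Defs.
From Stdlib Require Import Reals List.
From Coquelicot Require Import Coquelicot.
From Stdlib Require Import Lra Lia Classical ClassicalEpsilon Arith.Cantor.
Open Scope R_scope.
Set Implicit Arguments.

Lemma lub_ok (E : Rbar -> Prop) : Rbar_is_lub E (Rbar_lub E).
Proof. unfold Rbar_lub. destruct (Rbar_ex_lub E); assumption. Qed.
Lemma glb_ok (E : Rbar -> Prop) : Rbar_is_glb E (Rbar_glb E).
Proof. unfold Rbar_glb. destruct (Rbar_ex_glb E); assumption. Qed.

Lemma glb_le (E : Rbar -> Prop) x : E x -> Rbar_le (Rbar_glb E) x.
Proof. intros H. apply (proj1 (glb_ok E)). exact H. Qed.

Lemma glb_lt (E : Rbar -> Prop) r : Rbar_lt (Rbar_glb E) (Finite r) ->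
  exists x, E x /\ Rbar_lt x (Finite r).
Proof.
  intros H. apply NNPP; intro Hn.
  assert (Rbar_le (Finite r) (Rbar_glb E)).
  { apply (proj2 (glb_ok E)). intros x Hx. apply Rbar_not_lt_le. intro Hl.
    apply Hn. exists x; auto. }
  exact (Rbar_lt_not_le _ _ H H0).
Qed.

Lemma le_weak x r r' : Rbar_le x (Finite r) -> r <= r' -> Rbar_le x (Finite r').
Proof. intros H1 H2. eapply Rbar_le_trans; [exact H1|]. simpl; exact H2. Qed.

Lemma lt_le x r : Rbar_lt x (Finite r) -> Rbar_le x (Finite r).
Proof. intros H. apply Rbar_lt_le. exact H. Qed.

Lemma le_eta x r : Rbar_le (Finite 0) x -> (forall eta, 0 < eta -> Rbar_le x (Finite (r + eta))) ->
  Rbar_le x (Finite r).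
Proof.
  intros H0 H. destruct x as [x| |]; simpl in *.
  - apply Rnot_lt_le; intro Hl. specialize (H ((x - r)/2) ltac:(lra)). lra.
  - apply (H 1); lra.
  - contradiction.
Qed.

Section Met.
Variables (X : Type) (d : X -> X -> Rbar) (A : X -> Prop).
Hypothesis Hm : is_ext_metric d.

Lemma d_nonneg x y : Rbar_le (Finite 0) (d x y).
Proof. apply Hm. Qed.
Lemma d_refl x : d x x = Finite 0.
Proof. apply Hm. Qed.
Lemma d_sym x y : d x y = d y x.
Proof. apply Hm. Qed.

Lemma dtri x y z r s : Rbar_le (d x y) (Finite r) -> Rbar_le (d y z) (Finite s) ->
  Rbar_le (d x z) (Finite (r + s)).
Proof.
  intros H1 H2. destruct Hm as (H0 & _ & _ & Ht).
  specialize (Ht x y z). pose proof (H0 x y) as P1. pose proof (H0 y z) as P2.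
  destruct (d x y) as [a| |]; simpl in H1, P1; try contradiction.
  destruct (d y z) as [b| |]; simpl in H2, P2; try contradiction.
  simpl in Ht. eapply Rbar_le_trans; [exact Ht|]. simpl; lra.
Qed.

Lemma dist_set_lt x a r : A a -> Rbar_lt (d x a) (Finite r) -> Rbar_lt (dist_set d A x) (Finite r).
Proof.
  intros Ha H. eapply Rbar_le_lt_trans; [|exact H]. apply glb_le. exists a; auto.
Qed.

Lemma dist_set_ex x r : Rbar_lt (dist_set d A x) (Finite r) -> exists a, A a /\ Rbar_lt (d x a) (Finite r).
Proof.
  intros H. destruct (glb_lt _ _ H) as (y & (a & Ha & ->) & Hy). eauto.
Qed.

Definition bmq (a b : fsum X) (r : R) K phi z w : Prop :=
  is_matching A a b K phi z w /\
  (forall k, K k -> Rbar_le (d (fpt a k) (fpt b (phi k))) (Finite r)) /\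
  (forall i, fidx a i -> ~ K i -> Rbar_le (d (fpt a i) (z i)) (Finite r)) /\
  (forall j, fidx b j -> ~ (exists k, K k /\ phi k = j) -> Rbar_le (d (w j) (fpt b j)) (Finite r)).

Definition bm a b r := exists K phi z w, bmq a b r K phi z w.

Lemma W_lt_bm a b r : Rbar_lt (W_inf d A a b) (Finite r) -> bm a b r.
Proof.
  intros H. destruct (glb_lt _ _ H) as (c & (K & phi & z & w & Hmt & ->) & Hc).
  exists K, phi, z, w. unfold bmq. unfold match_cost in Hc.
  set (E := fun r0 : Rbar => _) in Hc.
  assert (U : forall x, E x -> Rbar_le x (Finite r)).
  { intros x Hx. apply lt_le. eapply Rbar_le_lt_trans; [|exact Hc]. apply (proj1 (lub_ok E)). exact Hx. }
  split; [exact Hmt|]. split; [|split].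
  - intros k Hk. apply U. right; left. eauto.
  - intros i Hi Hk. apply U. right; right; left. eauto.
  - intros j Hj Hk. apply U. right; right; right. eauto.
Qed.

Lemma bm_W a b r : 0 <= r -> bm a b r -> Rbar_le (W_inf d A a b) (Finite r).
Proof.
  intros Hr (K & phi & z & w & Hmt & H1 & H2 & H3).
  eapply Rbar_le_trans. { apply glb_le. exists K, phi, z, w. split; [exact Hmt|reflexivity]. }
  apply (proj2 (lub_ok _)). intros x Hx.
  destruct Hx as [->|[(k & Hk & ->)|[(i & Hi & Hk & ->)|(j & Hj & Hk & ->)]]]; auto.
  all: try (simpl; lra).
Qed.

Lemma bm_comp a b c r s : 0 <= r -> 0 <= s -> bm a b r -> bm b c s -> bm a c (r + s).
Proof.
  intros Hr Hs (K1 & p1 & z1 & w1 & (M1a & M1b & M1c & M1d & M1e) & B1a & B1b & B1c)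
    (K2 & p2 & z2 & w2 & (M2a & M2b & M2c & M2d & M2e) & B2a & B2b & B2c).
  exists (fun i => K1 i /\ K2 (p1 i)), (fun i => p2 (p1 i)),
    (fun i => if excluded_middle_informative (K1 i) then z2 (p1 i) else z1 i),
    (fun j => match excluded_middle_informative (exists m, K2 m /\ p2 m = j) with
              | left H => let m := proj1_sig (constructive_indefinite_description _ H) in
                          w1 m
              | right _ => w2 j end).
  split; [split; [|split; [|split; [|split]]]|split; [|split]].
  - intros k [Hk _]; auto.
  - intros k [_ Hk]; auto.
  - intros k k' [Hk Hk2] [Hk' Hk2'] He. apply M1c; auto.
  - intros i Hi Hn. destruct (excluded_middle_informative (K1 i)) as [Hk|Hk].
    + apply M2d; [apply M1b; exact Hk|]. intro H2; apply Hn; auto.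
    + apply M1d; auto.
  - intros j Hj Hn. destruct (excluded_middle_informative (exists m, K2 m /\ p2 m = j)) as [H|H].
    + destruct (constructive_indefinite_description _ H) as [m [Hm2 Hmj]]; simpl.
      apply M1e; auto. intros (k & Hk & Hkm). apply Hn. exists k. subst; auto.
    + apply M2e; auto.
  - intros k [Hk Hk2]. apply (dtri _ (fpt b (p1 k))); auto.
  - intros i Hi Hn. destruct (excluded_middle_informative (K1 i)) as [Hk|Hk].
    + apply (dtri _ (fpt b (p1 i))); [apply B1a; exact Hk|]. apply B2b; [apply M1b; exact Hk|]. intro H2; apply Hn; auto.
    + eapply le_weak; [apply B1b; auto|lra].
  - intros j Hj Hn. destruct (excluded_middle_informative (exists m, K2 m /\ p2 m = j)) as [H|H].
    + destruct (constructive_indefinite_description _ H) as [m [Hm2 Hmj]]; simpl.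
      subst j. apply (dtri _ (fpt b m)); auto. apply B1c; auto.
      intros (k & Hk & Hkm). apply Hn. exists k. subst; auto.
    + eapply le_weak; [apply B2c; auto|lra].
Qed.

End Met.
Unset Implicit Arguments.

Definition e (t : nat) : R := (/2)^t.
Lemma e_pos t : 0 < e t.
Proof. unfold e. apply pow_lt. lra. Qed.
Lemma e_S t : e (S t) = e t / 2.
Proof. unfold e. simpl. lra. Qed.
Lemma e_mono t t' : (t <= t')%nat -> e t' <= e t.
Proof.
  intros H. induction H. lra. rewrite e_S. pose proof (e_pos m). lra.
Qed.
Lemma e_small eps : 0 < eps -> exists N, e N < eps.
Proof.
  intros H. destruct (pow_lt_1_zero (/2) ltac:(rewrite Rabs_pos_eq; lra) eps H) as [N HN].
  exists N. specialize (HN N (le_n _)). rewrite Rabs_pos_eq in HN. exact HN.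
  apply pow_le; lra.
Qed.

Section Chains.
Variables (X : Type) (d : X -> X -> Rbar) (A : X -> Prop).
Hypothesis Hm : is_ext_metric d.
Hypothesis Hcomp : complete_on (fun _ : X => True) d.
Variables (beta : nat -> fsum X) (Kk : nat -> nat -> Prop) (ph : nat -> nat -> nat) (zz ww : nat -> nat -> X).
Hypothesis Hbm : forall t, bmq d A (beta t) (beta (S t)) (e t) (Kk t) (ph t) (zz t) (ww t).
Hypothesis Hdinf : forall t, in_Dinf d A (beta t).

Fixpoint pos (s i n : nat) : option nat :=
  match n with
  | O => Some i
  | S n' => match pos s i n' with
            | Some j => if excluded_middle_informative (Kk (s + n') j) then Some (ph (s + n') j) else None
            | None => None end
  end.

Definition start s i : Prop := fidx (beta s) i /\
  match s with O => True | S s' => ~ (exists k, Kk s' k /\ ph s' k = i) end.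

Definition inf s i := forall n, pos s i n <> None.

Definition pt s i n : X := match pos s i n with Some j => fpt (beta (s + n)) j | None => fpt (beta s) i end.

Lemma pos_S s i n j : pos s i (S n) = Some j -> exists k, pos s i n = Some k /\ Kk (s + n) k /\ j = ph (s + n) k.
Proof.
  simpl. destruct (pos s i n) as [k|]; [|discriminate].
  destruct (excluded_middle_informative (Kk (s + n) k)); [|discriminate].
  intros H; injection H; intros; subst; eauto.
Qed.

Lemma pos_fidx s i n j : fidx (beta s) i -> pos s i n = Some j -> fidx (beta (s + n)) j.
Proof.
  intros H0. revert j. induction n; intros j H.
  - simpl in H. injection H; intros; subst. rewrite Nat.add_0_r. exact H0.
  - destruct (pos_S _ _ _ _ H) as (k & Hk & HK & ->).
    replace (s + S n)%nat with (S (s + n)) by lia.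
    destruct (Hbm (s + n)) as ((Ma & Mb & _) & _). apply Mb; exact HK.
Qed.

Lemma pos_none s i n q : pos s i n = None -> pos s i (n + q) = None.
Proof.
  intros H. induction q. rewrite Nat.add_0_r; exact H.
  replace (n + S q)%nat with (S (n + q)) by lia. simpl. rewrite IHq. reflexivity.
Qed.

Lemma pt_some s i n j : pos s i n = Some j -> pt s i n = fpt (beta (s + n)) j.
Proof. intros H; unfold pt; rewrite H; reflexivity. Qed.

Lemma pt_dist s i n p : pos s i (n + p) <> None ->
  Rbar_le (d (pt s i n) (pt s i (n + p))) (Finite (2 * e (s + n) - 2 * e (s + n + p))).
Proof.
  induction p; intros H.
  - rewrite Nat.add_0_r. rewrite (d_refl Hm). simpl. rewrite Nat.add_0_r. lra.
  - destruct (pos s i (n + S p)) as [j'|] eqn:E; [|congruence].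
    replace (n + S p)%nat with (S (n + p)) in E by lia.
    destruct (pos_S _ _ _ _ E) as (k & Hk & HK & Hj).
    assert (IH := IHp ltac:(congruence)).
    replace (n + S p)%nat with (S (n + p)) by lia.
    rewrite (pt_some _ _ _ _ E). rewrite (pt_some _ _ _ _ Hk) in IH.
    destruct (Hbm (s + (n + p))) as (_ & B1 & _).
    specialize (B1 k HK). rewrite <- Hj in B1.
    replace (s + S (n + p))%nat with (S (s + (n + p))) by lia.
    eapply le_weak. apply (dtri Hm _ _ _ _ _ IH B1).
    replace (s + n + S p)%nat with (S (s + n + p)) by lia. rewrite e_S.
    replace (s + (n + p))%nat with (s + n + p)%nat by lia. lra.
Qed.

Lemma pt_dist' s i n p : pos s i (n + p) <> None ->
  Rbar_le (d (pt s i n) (pt s i (n + p))) (Finite (2 * e (s + n))).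
Proof.
  intros H. eapply le_weak. apply pt_dist; auto. pose proof (e_pos (s + n + p)). lra.
Qed.

Lemma inf_cauchy s i : inf s i -> cauchy_seq d (pt s i).
Proof.
  intros Hi eps He. destruct (e_small (eps / 2) ltac:(lra)) as [N HN].
  exists N. intros m n Hm' Hn'.
  assert (Hb : forall m p, (N <= m)%nat -> Rbar_lt (d (pt s i m) (pt s i (m + p))) (Finite eps)).
  { intros m0 p H0. eapply Rbar_le_lt_trans. apply pt_dist'. apply Hi. simpl.
    pose proof (e_mono N (s + m0) ltac:(lia)). lra. }
  destruct (Nat.le_ge_cases m n) as [H|H].
  - replace n with (m + (n - m))%nat by lia. apply Hb; auto.
  - replace m with (n + (m - n))%nat by lia. rewrite (d_sym Hm). apply Hb; auto.
Qed.

Lemma ex_lim s i : exists l : X, inf s i -> converges_to d (pt s i) l.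
Proof.
  destruct (classic (inf s i)) as [H|H].
  - destruct (Hcomp (pt s i) (fun _ => I) (inf_cauchy s i H)) as (l & _ & Hl). eauto.
  - exists (fpt (beta s) i). intro; contradiction.
Qed.

Definition Lim s i : X := proj1_sig (constructive_indefinite_description _ (ex_lim s i)).

Lemma Lim_spec s i : inf s i -> converges_to d (pt s i) (Lim s i).
Proof. unfold Lim. destruct (constructive_indefinite_description _ _); simpl; auto. Qed.

Lemma lim_dist s i n : inf s i -> Rbar_le (d (pt s i n) (Lim s i)) (Finite (2 * e (s + n))).
Proof.
  intros Hi. apply le_eta. apply (d_nonneg Hm). intros eta Heta.
  destruct (Lim_spec s i Hi eta Heta) as [N HN].
  apply (dtri Hm _ (pt s i (n + N))). apply pt_dist'. apply Hi.
  apply lt_le. apply HN. lia.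
Qed.


Fixpoint back (t j : nat) : nat * nat :=
  match t with
  | O => (O, j)
  | S t' => match excluded_middle_informative (exists k, Kk t' k /\ ph t' k = j) with
            | left H => back t' (proj1_sig (constructive_indefinite_description _ H))
            | right _ => (S t', j) end
  end.

Lemma back_spec t j : fidx (beta t) j ->
  start (fst (back t j)) (snd (back t j)) /\
  exists n, t = (fst (back t j) + n)%nat /\ pos (fst (back t j)) (snd (back t j)) n = Some j.
Proof.
  revert j. induction t; intros j Hj.
  - simpl. split. split; auto. exists O; auto.
  - simpl. destruct (excluded_middle_informative (exists k, Kk t k /\ ph t k = j)) as [H|H].
    + destruct (constructive_indefinite_description _ H) as [k [HK Hkj]]; simpl.
      destruct (Hbm t) as ((Ma & _) & _).
      destruct (IHt k (Ma k HK)) as (Hs & n & Ht & Hp). split; auto.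
      exists (S n). split. lia. simpl. rewrite Hp. rewrite <- Ht.
      destruct (excluded_middle_informative (Kk t k)); [|contradiction]. congruence.
    + simpl. split. split; auto. exists O. split; auto. lia.
Qed.

Lemma back_pos s i n j : start s i -> pos s i n = Some j -> back (s + n) j = (s, i).
Proof.
  intros [Hf Hs]. revert j. induction n; intros j Hp.
  - simpl in Hp. injection Hp; intros; subst. rewrite Nat.add_0_r.
    destruct s; simpl; auto.
    destruct (excluded_middle_informative _) as [H|H]; [contradiction|auto].
  - destruct (pos_S _ _ _ _ Hp) as (k & Hk & HK & Hj).
    replace (s + S n)%nat with (S (s + n)) by lia. simpl.
    destruct (excluded_middle_informative _) as [H|H].
    + destruct (constructive_indefinite_description _ H) as [k' [HK' Hk']]; simpl.
      destruct (Hbm (s + n)) as ((_ & _ & Mc & _) & _).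
      assert (k' = k) by (apply Mc; congruence). subst k'. apply IHn; auto.
    + exfalso; apply H; exists k; auto.
Qed.

Definition inA s i := start s i /\ inf s i /\ ~ A (Lim s i).

Definition alpha : fsum X :=
  FSum (fun n => inA (fst (of_nat n)) (snd (of_nat n))) (fun n => Lim (fst (of_nat n)) (snd (of_nat n))).

Lemma alpha_idx s i : fidx alpha (to_nat (s, i)) <-> inA s i.
Proof. unfold alpha. cbn [fidx]. rewrite cancel_of_to. cbn [fst snd]. tauto. Qed.
Lemma alpha_pt s i : fpt alpha (to_nat (s, i)) = Lim s i.
Proof. unfold alpha. cbn [fpt]. rewrite cancel_of_to. reflexivity. Qed.

Lemma start_far s i k : start s i -> inf s i -> (k < s)%nat ->
  exists w, A w /\ Rbar_le (d w (Lim s i)) (Finite (2 * e k)).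
Proof.
  intros [Hf Hs] Hi Hk. destruct s as [|s']; [lia|].
  destruct (Hbm s') as ((_ & _ & _ & _ & Me) & _ & _ & B3).
  exists (ww s' i). split. apply Me; auto.
  assert (P0 : pt (S s') i 0 = fpt (beta (S s')) i).
  { unfold pt. simpl. rewrite Nat.add_0_r. reflexivity. }
  pose proof (lim_dist (S s') i 0 Hi) as L. rewrite P0 in L.
  eapply le_weak. apply (dtri Hm _ _ _ _ _ (B3 i Hf Hs) L).
  rewrite Nat.add_0_r. rewrite e_S. pose proof (e_mono k s' ltac:(lia)). lra.
Qed.

Lemma alpha_dinf : in_Dinf d A alpha.
Proof.
  split.
  - intros n Hn. apply Hn.
  - intros delta Hd. destruct (e_small (delta / 4) ltac:(lra)) as [t Ht].
    destruct (Hdinf t) as [_ Hl]. destruct (Hl (delta / 2) ltac:(lra)) as [l Hl'].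
    exists (map (fun j => to_nat (back t j)) l).
    intros n Hn Hfar.
    destruct (of_nat n) as [s i] eqn:En.
    assert (n = to_nat (s, i)) as -> by (rewrite <- En, cancel_to_of; reflexivity).
    destruct (proj1 (alpha_idx s i) Hn) as (Hst & Hi & HnA).
    rewrite alpha_pt in Hfar.
    destruct (Nat.le_gt_cases s t) as [Hle|Hgt].
    + destruct (pos s i (t - s)) as [j|] eqn:Ep; [|exfalso; apply (Hi _ Ep)].
      pose proof (pos_fidx _ _ _ _ (proj1 Hst) Ep) as Hf.
      pose proof (back_pos _ _ _ _ Hst Ep) as Hb.
      replace (s + (t - s))%nat with t in Hf, Hb by lia.
      apply in_map_iff. exists j. rewrite Hb. split; auto.
      apply Hl'; auto. intro Hlt. apply Hfar.
      destruct (dist_set_ex _ _ _ _ Hlt) as (a & Ha & Hda).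
      apply (dist_set_lt _ _ _ a); auto.
      pose proof (lim_dist s i (t - s) Hi) as L. rewrite (pt_some _ _ _ _ Ep) in L.
      replace (s + (t - s))%nat with t in L by lia.
      rewrite (d_sym Hm) in L.
      eapply Rbar_le_lt_trans. apply (dtri Hm _ _ _ _ _ L (lt_le _ _ Hda)). simpl. lra.
    + exfalso. destruct (start_far s i t Hst Hi Hgt) as (w & Hw & Hdw).
      apply Hfar. apply (dist_set_lt _ _ _ w); auto. rewrite (d_sym Hm).
      eapply Rbar_le_lt_trans. exact Hdw. simpl. lra.
Qed.


Lemma ending s i n j0 q : pos s i n = Some j0 -> pos s i (n + q) = None ->
  exists p j', pos s i (n + p) = Some j' /\ ~ Kk (s + (n + p)) j'.
Proof.
  revert n j0. induction q; intros n j0 H0 H1.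
  - rewrite Nat.add_0_r in H1. congruence.
  - destruct (pos s i (S n)) as [j1|] eqn:E1.
    + replace (n + S q)%nat with (S n + q)%nat in H1 by lia.
      destruct (IHq (S n) j1 E1 H1) as (p & j' & Hp & HK).
      exists (S p), j'. replace (n + S p)%nat with (S n + p)%nat by lia. auto.
    + exists O, j0. rewrite Nat.add_0_r. split; auto.
      simpl in E1. rewrite H0 in E1.
      destruct (excluded_middle_informative (Kk (s + n) j0)); [discriminate|auto].
Qed.

Definition Kb k j := fidx (beta k) j /\ fidx alpha (to_nat (back k j)).

Lemma ex_z k j : exists z, fidx (beta k) j -> ~ Kb k j -> A z /\ Rbar_le (d (fpt (beta k) j) z) (Finite (2 * e k)).
Proof.
  destruct (classic (fidx (beta k) j)) as [Hj|Hj]; [|exists (fpt (beta k) j); tauto].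
  destruct (back_spec k j Hj) as (Hst & n & Hk & Hp).
  destruct (back k j) as [s i] eqn:Eb. simpl in Hst, Hk, Hp.
  destruct (classic (inf s i)) as [Hi|Hi].
  - exists (Lim s i). intros _ HK. split.
    + apply NNPP; intro HA. apply HK. split; auto. rewrite Eb. apply alpha_idx. split; auto.
    + pose proof (lim_dist s i n Hi) as L. rewrite (pt_some _ _ _ _ Hp) in L. rewrite <- Hk in L. exact L.
  - apply not_all_ex_not in Hi. destruct Hi as [m Hm0]. apply NNPP in Hm0.
    assert (Hnm : (n <= m)%nat).
    { destruct (Nat.le_gt_cases n m) as [H|H]; auto. exfalso.
      pose proof (pos_none s i m (n - m) Hm0). replace (m + (n - m))%nat with n in H0 by lia. congruence. }
    replace m with (n + (m - n))%nat in Hm0 by lia.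
    destruct (ending _ _ _ _ _ Hp Hm0) as (p & j' & Hp' & HK).
    exists (zz (s + (n + p)) j'). intros _ _. subst k.
    destruct (Hbm (s + (n + p))) as ((_ & _ & _ & Md & _) & _ & B2 & _).
    pose proof (pos_fidx _ _ _ _ (proj1 Hst) Hp') as Hf'.
    split. apply Md; auto.
    pose proof (pt_dist s i n p ltac:(congruence)) as D.
    rewrite (pt_some _ _ _ _ Hp), (pt_some _ _ _ _ Hp') in D.
    eapply le_weak. apply (dtri Hm _ _ _ _ _ D (B2 _ Hf' HK)).
    replace (s + (n + p))%nat with (s + n + p)%nat by lia.
    pose proof (e_pos (s + n + p)). lra.
Qed.

Lemma ex_w k n : exists w, fidx alpha n -> ~ (exists j, Kb k j /\ to_nat (back k j) = n) ->
  A w /\ Rbar_le (d w (fpt alpha n)) (Finite (2 * e k)).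
Proof.
  destruct (classic (fidx alpha n)) as [Hn|Hn]; [|exists (fpt alpha n); tauto].
  destruct (of_nat n) as [s i] eqn:En.
  assert (n = to_nat (s, i)) as -> by (rewrite <- En, cancel_to_of; reflexivity).
  destruct (proj1 (alpha_idx s i) Hn) as (Hst & Hi & HnA).
  destruct (Nat.le_gt_cases s k) as [Hle|Hgt].
  - exists (Lim s i). intros _ Hno. exfalso. apply Hno.
    destruct (pos s i (k - s)) as [j|] eqn:Ep; [|exfalso; apply (Hi _ Ep)].
    pose proof (pos_fidx _ _ _ _ (proj1 Hst) Ep) as Hf.
    pose proof (back_pos _ _ _ _ Hst Ep) as Hb.
    replace (s + (k - s))%nat with k in Hf, Hb by lia.
    exists j. rewrite Hb. split; auto. split; auto. rewrite Hb; auto.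
  - destruct (start_far s i k Hst Hi Hgt) as (w & Hw & Hdw).
    exists w. intros _ _. rewrite alpha_pt. auto.
Qed.

Lemma beta_alpha k : bm d A (beta k) alpha (2 * e k).
Proof.
  exists (Kb k), (fun j => to_nat (back k j)),
    (fun j => proj1_sig (constructive_indefinite_description _ (ex_z k j))),
    (fun n => proj1_sig (constructive_indefinite_description _ (ex_w k n))).
  split; [split; [|split; [|split; [|split]]]|split; [|split]].
  - intros j [H _]; exact H.
  - intros j [_ H]; exact H.
  - intros j j' [Hj _] [Hj' _] He.
    assert (Eb : back k j = back k j').
    { rewrite <- (cancel_of_to (back k j)), <- (cancel_of_to (back k j')). congruence. }
    destruct (back_spec k j Hj) as (_ & n & Hk & Hp).
    destruct (back_spec k j' Hj') as (_ & n' & Hk' & Hp').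
    rewrite Eb in Hk, Hp. assert (n = n') by lia. subst n'. congruence.
  - intros j Hj HK. destruct (constructive_indefinite_description _ (ex_z k j)) as [z Hz]; simpl.
    apply Hz; auto.
  - intros n Hn HK. destruct (constructive_indefinite_description _ (ex_w k n)) as [w Hw]; simpl.
    apply Hw; auto.
  - intros j [Hj Ha]. destruct (back_spec k j Hj) as (Hst & n & Hk & Hp).
    destruct (back k j) as [s i] eqn:Eb. cbn [fst snd] in Hst, Hk, Hp.
    rewrite alpha_pt. destruct (proj1 (alpha_idx s i) Ha) as (_ & Hi & _).
    pose proof (lim_dist s i n Hi) as L. rewrite (pt_some _ _ _ _ Hp) in L. rewrite <- Hk in L. exact L.
  - intros j Hj HK. destruct (constructive_indefinite_description _ (ex_z k j)) as [z Hz]; simpl.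
    apply Hz; auto.
  - intros n Hn HK. destruct (constructive_indefinite_description _ (ex_w k n)) as [w Hw]; simpl.
    apply Hw; auto.
Qed.

End Chains.

Fixpoint Mx (N : nat -> nat) (k : nat) : nat :=
  match k with O => N O | S k' => Nat.max (Mx N k') (N (S k')) end.
Lemma Mx_ge N k : (N k <= Mx N k)%nat.
Proof. destruct k; simpl; lia. Qed.
Lemma Mx_S N k : (Mx N k <= Mx N (S k))%nat.
Proof. simpl; lia. Qed.

Lemma bm_sig (X : Type) (d : X -> X -> Rbar) (A : X -> Prop) a b r : bm d A a b r ->
  {q : (nat -> Prop) * (nat -> nat) * (nat -> X) * (nat -> X) |
     bmq d A a b r (fst (fst (fst q))) (snd (fst (fst q))) (snd (fst q)) (snd q)}.
Proof.
  intros H. apply constructive_indefinite_description.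
  destruct H as (K & phi & z & w & H). exists (K, phi, z, w). exact H.
Qed.

Theorem theorem6p3 (X : Type) (d : X -> X -> Rbar) (A : X -> Prop) :
  is_ext_metric d ->
  is_closed_set d A ->
  complete_on (fun _ : X => True) d ->
  complete_on (in_Dinf d A) (W_inf d A).
Proof.
  intros Hm _ Hcomp u Hu Hc.
  pose (Nf := fun k => proj1_sig (constructive_indefinite_description _ (Hc (e k) (e_pos k)))).
  assert (HN : forall k m n, (Nf k <= m)%nat -> (Nf k <= n)%nat -> Rbar_lt (W_inf d A (u m) (u n)) (Finite (e k))).
  { intros k. unfold Nf. destruct (constructive_indefinite_description _ _) as [N HN]; simpl. exact HN. }
  pose (beta := fun k => u (Mx Nf k)).
  assert (Hb : forall t, bm d A (beta t) (beta (S t)) (e t)).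
  { intros t. apply W_lt_bm. apply HN. apply Mx_ge.
    pose proof (Mx_ge Nf t). pose proof (Mx_S Nf t). lia. }
  pose (q := fun t => proj1_sig (bm_sig _ _ _ _ _ _ (Hb t))).
  assert (Hbm : forall t, bmq d A (beta t) (beta (S t)) (e t) (fst (fst (fst (q t)))) (snd (fst (fst (q t))))
     (snd (fst (q t))) (snd (q t)))
    by (intros t; unfold q; destruct (bm_sig _ _ _ _ _ _ (Hb t)); simpl; assumption).
  exists (alpha X d A Hm Hcomp beta _ _ _ _ Hbm). split.
  - apply alpha_dinf. intros t. apply Hu.
  - intros eps He. destruct (e_small (eps / 3) ltac:(lra)) as [k Hk].
    exists (Nf k). intros n Hn.
    assert (B1 : bm d A (u n) (beta k) (e k)).
    { apply W_lt_bm. apply HN; auto. apply Mx_ge. }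
    assert (H0 : 0 <= e k) by (pose proof (e_pos k); lra).
    assert (H2 : 0 <= 2 * e k) by lra.
    pose proof (bm_comp Hm H0 H2 B1
       (beta_alpha X d A Hm Hcomp beta _ _ _ _ Hbm k)) as B.
    eapply Rbar_le_lt_trans. refine (bm_W _ B); lra. simpl. lra.
Qed.
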